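(* Let $R$ be Rado's poset. Then $AM_2(R(2))$ is well-quasi-ordered but not $\omega^2$-bqo.
   Context: Rado's poset $R$ has underlying set $V=\{(m,n)\in\mathbb{N}^2: m<n\}$ with $(m,n)\leq_R(m',n')$ iff either ($m=m'$ and $n\leq n'$) or $n<m'$. For a poset $P$, $P(2)$ is the set $P\times\{0,1\}$ with the order: $(x,i)\leq(y,j)$ iff either ($i=j$ and $x\leq y$), or ($i=0$, $j=1$, and there exist incomparable $x',y'\in P$ with $x\leq x'$ and $y'\leq y$). $AM_2(Q)$ is the set of two-element maximal antichains of $Q$ ordered by domination ($X\leq Y$ iff each $x\in X$ is below some $y\in Y$). Well-quasi-ordered: well-founded with no infinite antichain. Barriers and $\alpha$-bqo: finite subsets of $\mathbb{N}$ are identified with their increasing enumerations; $s\triangleleft t$ means there is a finite $r\subseteq\mathbb{N}$ with $s$ a proper initial segment of $r$ and $t$ equal to $r$ minus its least element. A barrier is an infinite set $B$ of finite subsets of $\mathbb{N}$, no member a proper subset of another, such that every infinite $X\subseteq\bigcup B$ has a nonempty initial segment in $B$; its order type is that of $B$ under the lexicographic order. A map $f$ from a barrier into a quasi-order $Q$ is good if $f(s)\leq f(t)$ for some $s\triangleleft t$; $Q$ is $\alpha$-bqo if every map from a barrier of order type at most $\alpha$ into $Q$ is good. *)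

(* Defs.v *)
From mathcomp Require Import all_boot.
Set Implicit Arguments. Unset Strict Implicit. Unset Printing Implicit Defensive.

Definition qlt {A : Type} (le : A -> A -> Prop) (x y : A) : Prop := le x y /\ ~ le y x.

Definition incomp {A : Type} (le : A -> A -> Prop) (x y : A) : Prop :=
  ~ le x y /\ ~ le y x.

Definition qwf {A : Type} (C : A -> Prop) (le : A -> A -> Prop) : Prop :=
  ~ exists q : nat -> A, (forall n, C (q n)) /\ (forall n, qlt le (q n.+1) (q n)).

Definition no_inf_antichain {A : Type} (C : A -> Prop) (le : A -> A -> Prop) : Prop :=
  ~ exists q : nat -> A, (forall n, C (q n)) /\
      (forall i j, i <> j -> incomp le (q i) (q j)).

Definition wqo {A : Type} (C : A -> Prop) (le : A -> A -> Prop) : Prop :=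
  qwf C le /\ no_inf_antichain C le.

Definition radoV (p : nat * nat) : Prop := (p.1 < p.2)%N.

Definition rado_le (p q : nat * nat) : Prop :=
  (p.1 = q.1 /\ (p.2 <= q.2)%N) \/ (p.2 < q.1)%N.

Definition dbl_carrier {A : Type} (C : A -> Prop) (x : A * bool) : Prop := C x.1.

Definition dbl_le {A : Type} (C : A -> Prop) (le : A -> A -> Prop)
    (x y : A * bool) : Prop :=
  (x.2 = y.2 /\ le x.1 y.1) \/
  (x.2 = false /\ y.2 = true /\
     exists x' y', C x' /\ C y' /\ incomp le x' y' /\ le x.1 x' /\ le y' y.1).

Definition AM2 {A : Type} (C : A -> Prop) (le : A -> A -> Prop) (X : A -> Prop) : Prop :=
  exists a b, C a /\ C b /\ a <> b /\ (forall z, X z <-> (z = a \/ z = b)) /\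
    incomp le a b /\
    (forall z, C z -> ~ X z -> ~ (incomp le z a /\ incomp le z b)).

Definition dominated {A : Type} (le : A -> A -> Prop) (X Y : A -> Prop) : Prop :=
  forall x, X x -> exists y, Y y /\ le x y.

(* a finite subset of nat, identified with its increasing enumeration *)
Definition fin_nat (s : seq nat) : Prop := sorted ltn s.

(* s is a nonempty initial segment of the (infinite) set X *)
Definition init_seg (X : nat -> bool) (s : seq nat) : Prop :=
  s <> [::] /\ fin_nat s /\ forall n, (n <= last 0 s)%N -> (n \in s <-> X n).

Definition barrier (B : seq nat -> Prop) : Prop :=
  (forall s, B s -> fin_nat s) /\
  (* B is infinite *)
  (forall l : seq (seq nat), exists s, B s /\ s \notin l) /\
  (forall s t, B s -> B t -> {subset s <= t} -> s = t) /\
  (forall X : nat -> bool,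
     (forall n, exists m, (n <= m)%N /\ X m) ->
     (forall m, X m -> exists s, B s /\ m \in s) ->
     exists s, B s /\ init_seg X s).

Definition lex_lt (s t : seq nat) : Prop :=
  ((size s < size t)%N /\ s = take (size s) t) \/
  (exists i, (i < size s)%N /\ (i < size t)%N /\ take i s = take i t /\
             (nth 0 s i < nth 0 t i)%N).

(* lexicographic order on omega^2 = nat * nat *)
Definition lex2_lt (a b : nat * nat) : Prop :=
  (a.1 < b.1)%N \/ (a.1 = b.1 /\ (a.2 < b.2)%N).

(* (B, lex) has order type at most omega^2: it order-embeds into omega^2 *)
Definition otp_le_omega2 (B : seq nat -> Prop) : Prop :=
  exists g : seq nat -> nat * nat,
    forall s t, B s -> B t -> lex_lt s t -> lex2_lt (g s) (g t).

(* s <| t : exists r with s a proper initial segment of r and t = r minus min r *)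
Definition shift_rel (s t : seq nat) : Prop :=
  exists r, fin_nat r /\ (exists k, (k < size r)%N /\ s = take k r) /\ t = behead r.

Definition good_map {A : Type} (le : A -> A -> Prop) (B : seq nat -> Prop)
    (f : seq nat -> A) : Prop :=
  exists s t, B s /\ B t /\ shift_rel s t /\ le (f s) (f t).

Definition omega2_bqo {A : Type} (C : A -> Prop) (le : A -> A -> Prop) : Prop :=
  forall B : seq nat -> Prop, barrier B -> otp_le_omega2 B ->
  forall f : seq nat -> A, (forall s, B s -> C (f s)) -> good_map le B f.

Definition R2_carrier := dbl_carrier radoV.
Definition R2_le := dbl_le radoV rado_le.
Definition AM2R2_carrier := AM2 R2_carrier R2_le.
Definition AM2R2_le := dominated R2_le.

(* Main.v *)
Require Import Defs.
From mathcomp Require Import all_boot.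
From mathcomp Require Import zify.
From Stdlib Require Import Classical ClassicalEpsilon.

Ltac rl := unfold incomp, rado_le, radoV in *; simpl in *; lia.

Lemma rado_refl x : rado_le x x.
Proof. by left; split. Qed.

Lemma rado_trans a b c : radoV b -> rado_le a b -> rado_le b c -> rado_le a c.
Proof. case: a => a1 a2; case: b => b1 b2; case: c => c1 c2; rl. Qed.

Lemma le_same l x y : R2_le (x,l) (y,l) <-> rado_le x y.
Proof.
rewrite /R2_le /dbl_le /=; split.
- case => [[_ H]//|[H1 [H2 _]]]. by rewrite H1 in H2.
- by move=> H; left.
Qed.

Lemma not_le_10 x y : ~ R2_le (x,true) (y,false).
Proof. rewrite /R2_le /dbl_le /=; case => [[H _]|[H _]]; congruence. Qed.

Lemma le_01_intro u v x' y' : radoV x' -> radoV y' -> incomp rado_le x' y' ->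
  rado_le u x' -> rado_le y' v -> R2_le (u,false) (v,true).
Proof.
move=> H1 H2 H3 H4 H5; right; split=>//; split=>//; exists x', y'.
split; [done|split; [done|split; [done|split; done]]].
Qed.

Lemma cross_not u v : radoV u -> radoV v -> rado_le v u -> ~ R2_le (u,false) (v,true).
Proof.
move=> Hu Hv Hvu [[H _]|[_ [_ [x' [y' [Hx' [Hy' [[_ Hn] [Hux Hyv]]]]]]]]]; first by [].
apply: Hn. apply: (rado_trans _ _ _ Hu); last exact Hux. exact: (rado_trans _ _ _ Hv Hyv Hvu).
Qed.

Lemma rado_max u v : radoV u -> radoV v -> incomp rado_le u v ->
  (forall w, radoV w -> w <> u -> w <> v -> ~ (incomp rado_le w u /\ incomp rado_le w v)) ->
  u.1 < v.1 -> u = (0,1) /\ exists k, v = (1,k) /\ 1 < k.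
Proof.
case: u => m n; case: v => p q /= Hu Hv Hinc Hmax Hlt.
have Hpn : p <= n by rl.
have Hm0 : m = 0.
{ case: (posnP m) => // Hm. exfalso. apply: (Hmax (0, n+q+1)).
 all: try (move=> [E1 E2]). all: rl. }
have Hp1 : p = 1.
{ case: (leqP p 1) => Hp; first by rl. exfalso. apply: (Hmax (1, n+q+3)).
  all: try (move=> [E1 E2]). all: rl. }
have Hn1 : n = 1.
{ case: (leqP n 1) => Hn; first by rl. exfalso. apply: (Hmax (2, n+q+3)).
  all: try (move=> [E1 E2]). all: rl. }
subst. split => //. exists q; split => //; exact Hv.
Qed.

Lemma same_level l X u v : radoV u -> radoV v ->
  (forall z, X z <-> z = (u,l) \/ z = (v,l)) -> incomp R2_le (u,l) (v,l) ->
  (forall z, R2_carrier z -> ~ X z -> ~ (incomp R2_le z (u,l) /\ incomp R2_le z (v,l))) ->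
  (u = (0,1) /\ exists k, v = (1,k) /\ 1 < k) \/ (v = (0,1) /\ exists k, u = (1,k) /\ 1 < k).
Proof.
move=> Hu Hv HX [H1 H2] Hmax.
have Hi : incomp rado_le u v.
{ split => h; [apply: H1|apply: H2]; exact/le_same. }
have Hm : forall w, radoV w -> w <> u -> w <> v -> ~ (incomp rado_le w u /\ incomp rado_le w v).
{ move=> w Hw Hwu Hwv [[h1 h2] [h3 h4]]. apply: (Hmax (w,l)).
  - exact Hw.
  - rewrite HX => -[E|E]; [apply: Hwu | apply: Hwv]; congruence.
  - split; split=> /le_same; [exact: h1|exact: h2|exact: h3|exact: h4]. }
case: (ltngtP u.1 v.1) => Hlt.
- left; exact: (rado_max u v Hu Hv Hi Hm Hlt).
- right. apply: (rado_max v u Hv Hu) => //.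
  + by case: Hi => a b; split.
  + move=> w Hw Ha Hb [h h']; exact: (Hm w Hw Hb Ha (conj h' h)).
- exfalso. rl.
Qed.

Lemma mixed X u v : radoV u -> radoV v ->
  (forall z, X z <-> z = (u,false) \/ z = (v,true)) ->
  incomp R2_le (u,false) (v,true) ->
  (forall z, R2_carrier z -> ~ X z -> ~ (incomp R2_le z (u,false) /\ incomp R2_le z (v,true))) ->
  u = v.
Proof.
move=> Hu Hv HX [Hn _] Hmax.
have Hcmp : rado_le u v \/ rado_le v u.
{ apply: NNPP => H; apply: Hn; apply: (le_01_intro u v u v Hu Hv).
  - split => h; apply: H; by [left|right].
  - exact: rado_refl.
  - exact: rado_refl. }
move: Hu Hv Hcmp Hn HX Hmax; case: u => m n; case: v => p q Hu Hv Hcmp Hn HX Hmax.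
have wit : forall w, radoV w -> rado_le (p,q) w -> incomp rado_le w (m,n) -> (m,n) = (p,q).
{ move=> w Hw Hvw Hwu. exfalso. apply: (Hmax (w,false)).
  - exact Hw.
  - rewrite HX => -[E|E]; [|congruence]. case: E => E. rewrite E in Hwu.
    by case: Hwu => h _; apply: h; exact: rado_refl.
  - split; split.
    + move/le_same; by case: Hwu.
    + move/le_same; by case: Hwu.
    + exact: cross_not.
    + exact: not_le_10. }
case: Hcmp => H.
- have : (m = p /\ n = q) \/ m < p \/ (m = p /\ n < q) by rl.
  case=> [[-> ->] //|[Hl|[E Hl]]]; exfalso; apply: Hn.
  + apply: (le_01_intro _ _ (m, n+p+1) (p,q)); rl.
  + apply: (le_01_intro _ _ (n.+1, n+q+2) (p,q)); rl.
- have : (m = p /\ n = q) \/ (m = p /\ q < n) \/ q < m by rl.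
  case=> [[-> ->] //|[[E Hl]|Hl]].
  + apply: (wit (q.+1, n+q+2)); rl.
  + apply: (wit (p, m+n+q+1)); rl.
Qed.

Definition Ls (k : nat) : (nat*nat)*bool -> Prop :=
  fun z => z = ((0,1),false) \/ z = ((1,k),false).
Definition Ds (x : nat*nat) : (nat*nat)*bool -> Prop :=
  fun z => z = (x,false) \/ z = (x,true).

Lemma classify X : AM2R2_carrier X ->
  (exists k, 1 < k /\ forall z, X z <-> Ls k z) \/
  (exists x, radoV x /\ forall z, X z <-> Ds x z).
Proof.
move=> [[u lu] [[v lv] [Cu [Cv [Hab [HX [Hinc Hmax]]]]]]].
rewrite /R2_carrier /dbl_carrier /= in Cu Cv.
case: lu lv HX Hinc Hmax Hab => [] [] HX Hinc Hmax Hab.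
- exfalso.
  have key : forall k, 1 < k -> ((u = (0,1) /\ v = (1,k)) \/ (v = (0,1) /\ u = (1,k))) -> False.
  { move=> k Hk Huv. apply: (Hmax ((k.+1, k.+2), false)).
    - rewrite /R2_carrier /dbl_carrier /radoV /=; lia.
    - by rewrite HX => -[] E; congruence.
    - case: Huv => [[-> ->]|[-> ->]]; split; split; try exact: not_le_10;
      apply: cross_not; rl. }
  case: (same_level true X u v Cu Cv HX Hinc Hmax) => [[E1 [k [E2 Hk]]]|[E1 [k [E2 Hk]]]];
    apply: (key k Hk); [left|right]; done.
- right. exists v; split; first exact Cv.
  have Huv : v = u.
  { apply: (mixed X v u Cv Cu).
    - move=> z; exact: (iff_trans (HX z) (or_comm _ _)).
    - by case: Hinc => a b; split.
    - move=> z Cz nX [h1 h2]; exact: (Hmax z Cz nX (conj h2 h1)). }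
  subst v. move=> z; exact: (iff_trans (HX z) (or_comm _ _)).
- right. exists u; split; first exact Cu.
  have Huv : u = v by apply: (mixed X u v Cu Cv).
  by subst v.
- left.
  case: (same_level false X u v Cu Cv HX Hinc Hmax) => [[E1 [k [E2 Hk]]]|[E1 [k [E2 Hk]]]];
    exists k; split => //; subst u v.
  + exact HX.
  + move=> z; exact: (iff_trans (HX z) (or_comm _ _)).
Qed.

Lemma min_exists (P : nat -> Prop) (f : nat -> nat) : (exists n, P n) ->
  exists n, P n /\ forall m, P m -> f n <= f m.
Proof.
case=> n0 Pn0.
suff H : forall v n, f n <= v -> P n -> exists n, P n /\ forall m, P m -> f n <= f m.
  exact: (H (f n0) n0 (leqnn _) Pn0).
elim=> [|v IH] n Hn Pn.
- exists n; split=> // m _; lia.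
- case: (classic (exists m, P m /\ f m < f n)) => [[m [Pm Hm]]|H].
  + apply: (IH m) => //; lia.
  + exists n; split=> // m Pm. case: (leqP (f n) (f m)) => // Hlt.
    exfalso; apply: H; exists m; split=> //.
Qed.

Lemma color_good B : forall (c f : nat -> nat), (forall j, c j < B) ->
  exists i j, i < j /\ c i = c j /\ f i <= f j.
Proof.
elim: B => [|B IH] c f Hc; first by have := Hc 0.
case: (classic (forall N, exists n, N <= n /\ c n = B)) => H.
- have [n1 [_ Hn1]] := H 0.
  have [n0 [Hn0 Hmin]] := min_exists (fun n => c n = B) f (ex_intro _ n1 Hn1).
  have [j [Hj Hcj]] := H n0.+1.
  exists n0, j. split => //. split; [by rewrite Hn0 Hcj | exact: Hmin].
- have [N HN] : exists N, forall n, N <= n -> c n <> B.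
  { apply: NNPP => H2; apply: H => N; apply: NNPP => H3; apply: H2; exists N => n Hn Hcn.
    apply: H3; exists n; done. }
  have [i [j [Hij [Hc' Hf]]]] := IH (fun j => c (N + j)) (fun j => f (N + j))
     (fun j => ltac:(have := Hc (N + j); have := HN (N + j) (leq_addr _ _); lia)).
  exists (N+i), (N+j); split; [lia | done].
Qed.

Lemma rado_good (x : nat -> nat*nat) : (forall n, radoV (x n)) ->
  exists i j, i < j /\ rado_le (x i) (x j).
Proof.
move=> Hx.
case: (classic (exists j, (x 0).2 < (x j).1)) => [[j Hj]|H].
- exists 0, j; split; last by right.
  have h0 := Hx 0. rewrite /radoV in h0. case: j Hj => [|j] Hj //. lia.
- have Hb : forall j, (x j).1 < ((x 0).2).+1.
  { move=> j; have : ~ ((x 0).2 < (x j).1) by move=> h; apply H; exists j. lia. }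
  have [i [j [Hij [E Hf]]]] := color_good _ (fun j => (x j).1) (fun j => (x j).2) Hb.
  exists i, j; split=> //; left; split => //.
Qed.

Lemma choice_nat (A : Type) (P : nat -> A -> Prop) :
  (forall n, exists a, P n a) -> exists f, forall n, P n (f n).
Proof.
move=> H. exists (fun n => proj1_sig (constructive_indefinite_description _ (H n))).
move=> n; exact: proj2_sig.
Qed.

Lemma dom_ext X X' Y Y' : (forall z, X z <-> X' z) -> (forall z, Y z <-> Y' z) ->
  dominated R2_le X' Y' -> dominated R2_le X Y.
Proof. move=> HX HY H x /HX /H [y [/HY Hy Hle]]; by exists y. Qed.

Lemma Ls_le k k' : k <= k' -> dominated R2_le (Ls k) (Ls k').
Proof.
move=> H x [->|->]; [exists ((0,1),false) | exists ((1,k'),false)];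
  (split; [by [left|right] | apply/le_same; rl]).
Qed.

Lemma Ds_le x x' : rado_le x x' -> dominated R2_le (Ds x) (Ds x').
Proof.
move=> H z [->|->]; [exists (x',false) | exists (x',true)];
  (split; [by [left|right] | exact/le_same]).
Qed.

Lemma good_AM2 (q : nat -> (nat*nat)*bool -> Prop) : (forall n, AM2R2_carrier (q n)) ->
  exists i j, i < j /\ AM2R2_le (q i) (q j).
Proof.
move=> Hq.
have Hcl := fun n => classify (q n) (Hq n).
case: (classic (forall N, exists n, N <= n /\ exists k, 1 < k /\ forall z, q n z <-> Ls k z)) => H.
- have [n1 [_ Hn1]] := H 0.
  have [k0 [[n0 [H1 Hn0]] Hmin]] :=
    min_exists (fun k => exists n, 1 < k /\ forall z, q n z <-> Ls k z) id
      (let: ex_intro k h := Hn1 in ex_intro _ k (ex_intro _ n1 h)).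
  have [j [Hj [k [Hk Hjk]]]] := H n0.+1.
  exists n0, j; split => //. apply: (dom_ext _ _ _ _ Hn0 Hjk). apply: Ls_le.
  apply: (Hmin k). exists j. by split.
- have [N HN] : exists N, forall n, N <= n -> forall k, 1 < k -> ~ (forall z, q n z <-> Ls k z).
  { apply: NNPP => H2; apply: H => N; apply: NNPP => H3; apply: H2; exists N => n Hn k Hk Hqk.
    apply: H3; exists n; split => //; exists k; done. }
  have HD : forall n, exists x, radoV x /\ forall z, q (N+n) z <-> Ds x z.
  { move=> n; case: (Hcl (N+n)) => // [[k [Hk Hqk]]]; exfalso.
    exact: (HN (N+n) (leq_addr _ _) k Hk Hqk). }
  have [xs Hxs] := choice_nat _ _ HD.
  have [i [j [Hij Hle]]] := rado_good xs (fun n => proj1 (Hxs n)).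
  exists (N+i), (N+j); split; first lia.
  apply: (dom_ext _ _ _ _ (proj2 (Hxs i)) (proj2 (Hxs j))). exact: Ds_le.
Qed.

Lemma R2_trans x y z : R2_carrier y -> R2_le x y -> R2_le y z -> R2_le x z.
Proof.
case: x => x lx; case: y => y ly; case: z => z lz.
rewrite /R2_carrier /dbl_carrier /R2_le /dbl_le /= => Cy.
case => [[E1 H1]|[E1 [E2 [x' [y' [Cx [Cy' [Hi [H1 H2]]]]]]]]];
  case => [[E3 H3]|[E3 [E4 [x'' [y'' [Cx2 [Cy2 [Hi2 [H4 H5]]]]]]]]].
- left; split; [congruence | exact: (rado_trans _ _ _ Cy H1 H3)].
- right; split; [congruence|split => //]. exists x'', y''.
  split; [done|split; [done|split; [done|split; [exact: (rado_trans _ _ _ Cy H1 H4)|done]]]].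
- right; split; [done|split; first congruence]. exists x', y'.
  split; [done|split; [done|split; [done|split; [done|exact: (rado_trans _ _ _ Cy H2 H3)]]]].
- congruence.
Qed.

Lemma AM2_trans X Y Z : AM2R2_carrier Y -> AM2R2_le X Y -> AM2R2_le Y Z -> AM2R2_le X Z.
Proof.
move=> [a [b [Ca [Cb [_ [HY _]]]]]] H1 H2 x Hx.
have [y [Hy Hxy]] := H1 x Hx. have [z [Hz Hyz]] := H2 y Hy.
exists z; split=> //. apply: (R2_trans _ _ _ _ Hxy Hyz).
by case: ((HY y).1 Hy) => ->.
Qed.

Lemma wqo_part : wqo AM2R2_carrier AM2R2_le.
Proof.
split.
- move=> [q [Hq Hdesc]].
  have [i [j [Hij Hle]]] := good_AM2 q Hq.
  have key : forall d, AM2R2_le (q i) (q (i.+1 + d)) -> AM2R2_le (q i) (q i.+1).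
  { elim=> [|d IH] H; first by rewrite addn0 in H.
    apply: IH. apply: (AM2_trans _ _ _ (Hq (i.+1 + d.+1)) H).
    rewrite addnS. exact: (proj1 (Hdesc (i.+1 + d))). }
  have E : j = i.+1 + (j - i.+1) by lia.
  rewrite E in Hle. exact: (proj2 (Hdesc i) (key _ Hle)).
- move=> [q [Hq Hanti]].
  have [i [j [Hij Hle]]] := good_AM2 q Hq.
  have Hne : i <> j by lia.
  exact: (proj1 (Hanti i j Hne) Hle).
Qed.

Lemma Ds_carrier x : radoV x -> AM2R2_carrier (Ds x).
Proof.
move=> Hx. exists (x,false), (x,true).
split; first exact Hx. split; first exact Hx. split; first congruence.
split; first by move=> z; exact: iff_refl.
split.
- split; [apply: cross_not => //; exact: rado_refl | exact: not_le_10].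
- move=> [w l] Cw _ [[H1 H2] [H3 H4]].
  case: l Cw H1 H2 H3 H4 => Cw H1 H2 H3 H4.
  + apply: H2. apply: (le_01_intro x w x w Hx Cw).
    * split => h; [apply: H4|apply: H3]; exact/le_same.
    * exact: rado_refl.
    * exact: rado_refl.
  + apply: H3. apply: (le_01_intro w x w x Cw Hx).
    * split => h; [apply: H1|apply: H2]; exact/le_same.
    * exact: rado_refl.
    * exact: rado_refl.
Qed.

Definition B2 (s : seq nat) : Prop := exists a b, a < b /\ s = [:: a; b].
Definition f2 (s : seq nat) := Ds (nth 0 s 0, nth 0 s 1).

Lemma sumn_in (l : seq (seq nat)) x : x \in l -> sumn x <= sumn (map sumn l).
Proof.
elim: l => [|y l IH] //=. rewrite inE => /orP [/eqP ->|/IH H]; lia.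
Qed.

Lemma B2_barrier : barrier B2.
Proof.
split.
{ move=> s [a [b [Hab ->]]]. by rewrite /fin_nat /= andbT. }
split.
{ move=> l. exists [:: 0; (sumn (map sumn l)).+1]. split.
  - exists 0, (sumn (map sumn l)).+1; split => //.
  - apply/negP => Hin. have := sumn_in l _ Hin. simpl; lia. }
split.
{ move=> s t [a [b [Hab ->]]] [c [d [Hcd ->]]] Hsub.
  have Hb' : b \in [:: c; d] by apply: Hsub; rewrite !inE eqxx orbT.
  have := Hsub a (mem_head _ _). move: Hb'.
  rewrite !inE => /orP[/eqP Hb|/eqP Hb] /orP[/eqP Ha|/eqP Ha].
  all: have [E1 E2] : a = c /\ b = d by lia.
  all: by rewrite E1 E2. }
move=> X Hinf _.
have ex1 : exists m, X m by have [m [_ Hm]] := Hinf 0; exists m.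
case: (ex_minnP ex1) => a Xa mina.
have ex2 : exists m, X m && (a < m).
{ have [m [Hm Xm]] := Hinf a.+1; exists m; rewrite Xm; done. }
case: (@ex_minnP (fun m => X m && (a < m)) ex2) => b /andP [Xb Hab] minb.
exists [:: a; b]. split; first by exists a, b.
split; first by []. split; first by rewrite /fin_nat /= Hab.
move=> n Hn. rewrite !inE /=. split.
- by case/orP => /eqP ->.
- move=> Xn. case: (ltngtP n a) => H.
  + have := mina n Xn; lia.
  + have := minb n; rewrite Xn H => /(_ isT). simpl in Hn. move=> h.
    apply/orP; right; apply/eqP; lia.
  + by apply/orP; left; apply/eqP.
Qed.

Lemma B2_otp : otp_le_omega2 B2.
Proof.
exists (fun s => (nth 0 s 0, nth 0 s 1)).
move=> s t [a [b [Hab ->]]] [c [d [Hcd ->]]] [[Hsz _]|[i [Hi [_ [Htk Hlt]]]]]; first by [].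
case: i Hi Htk Hlt => [|[|i]] //= Hi Htk Hlt.
- by left.
- case: Htk => ->. by right.
Qed.

Lemma shift_B2 a b c d : shift_rel [:: a; b] [:: c; d] -> b = c.
Proof.
move=> [r [_ [[k [Hk Hs]] Ht]]].
case: r Hk Hs Ht => [|r0 [|r1 [|r2 r']]] Hk Hs Ht;
  case: k Hk Hs => [|[|[|k]]] Hk Hs //=; simpl in *; try discriminate.
case: Hs => _ ->. by case: Ht => ->.
Qed.

Theorem lemma6p4 :
  wqo AM2R2_carrier AM2R2_le /\ ~ omega2_bqo AM2R2_carrier AM2R2_le.
Proof.
split; first exact: wqo_part.
move=> H.
have := H B2 B2_barrier B2_otp f2.
case.
- move=> s [a [b [Hab ->]]]. apply: Ds_carrier. exact Hab.
- move=> s [t [[a [b [Hab ->]]] [[c [d [Hcd ->]]] [Hsh Hle]]]].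
  have Ebc := shift_B2 a b c d Hsh.
  have [y [Hy Hxy]] := Hle ((a,b),true) (or_intror erefl).
  case: Hy => Ey; rewrite Ey in Hxy.
  + exact: not_le_10 Hxy.
  + move/le_same: Hxy. rl.
Qed.
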